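(* Let $n\ge 2$, $N=n^2+1$, $m=(n-1)^2+1$, let $F,D\in\mathcal{S}^n$, $C\in\mathbb{R}^{n\times n}$, let $$L_Q=\begin{pmatrix}0&-\tfrac12\mathrm{vec}(C)^T\\ -\tfrac12\mathrm{vec}(C)& D\otimes F\end{pmatrix}\in\mathcal{S}^{N},$$ let $\hat V\in\mathbb{R}^{N\times m}$ be the matrix described in the context, let $J$ be a given set of index pairs of $N\times N$ matrices, and fix $\mu>0$. Suppose $(R^*,Z^* )$, with $R^*\in\mathcal{S}^m$, $Z^*\in\mathcal{S}^N$, is the unique solution of the system $$(-\hat V^TZ\hat V)R=\mu I,\quad \mathcal{G}_J(\hat VR\hat V^T)=E_{00},\quad -(L_Q+Z)\in\mathcal{S}^{N}_J,\quad R\succeq O,\quad -\hat V^TZ\hat V\succeq O.$$ Let $Y^*=\hat VR^*\hat V^T$. Then $$\max_{Z\in\mathcal{S}^N}L_0^{\rm BQAP}(R^*,Y^*,Z)=L_0^{\rm BQAP}(R^*,Y^*,Z^* )=\min_{R\succ O,\;Y\in\mathcal{S}^N}L_0^{\rm BQAP}(R,Y,Z^* ),$$ i.e. $(R^*,Y^*,Z^* )$ is a saddle point of $L_0^{\rm BQAP}$.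
   Context: $\mathcal{S}^k$ is the space of real symmetric $k\times k$ matrices, $\langle A,B\rangle=\mathrm{Tr}(A^TB)$, $\succeq$ / $\succ$ denote positive semidefinite / definite, $\mathrm{vec}(C)$ stacks the columns of $C$, and $\otimes$ is the Kronecker product. $\hat V$ is the column-normalized version of $\bar V=\begin{pmatrix}1&0^T\\ \frac1n(e\otimes e)&V\otimes V\end{pmatrix}$, $V=\begin{pmatrix}I_{n-1}\\ -e^T\end{pmatrix}$, $e$ the all-ones vector, so that $\hat V^T\hat V=I$. The gangster operator $\mathcal{G}_J:\mathcal{S}^N\to\mathcal{S}^N$ is $(\mathcal{G}_J(Y))_{ij}=Y_{ij}$ if $(i,j)\in J$ or $(j,i)\in J$, and $0$ otherwise; $\mathcal{S}^N_J=\{X\in\mathcal{S}^N:\mathcal{G}_J(X)=X\}$. $E_{00}\in\mathcal{S}^N$ is the matrix whose $(1,1)$ entry is $1$ and all others $0$. $\mathcal{I}(Y)=0$ if $\mathcal{G}_J(Y)=E_{00}$ and $+\infty$ otherwise. The unaugmented Lagrangian is, for $R\succ O$, $Y,Z\in\mathcal{S}^N$, $$L_0^{\rm BQAP}(R,Y,Z)=\langle L_Q,Y\rangle-\mu\log(\det R)+\mathcal{I}(Y)+\langle Z,\,Y-\hat VR\hat V^T\rangle.$$ *)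

(* Defs.v *)
From HB Require Import structures.
From mathcomp Require Import all_boot all_order all_algebra.
From mathcomp Require Import all_classical all_reals all_analysis.
From mathcomp Require Import mxtens.
Set Implicit Arguments. Unset Strict Implicit. Unset Printing Implicit Defensive.
Import Order.TTheory GRing.Theory Num.Theory.
Local Open Scope ring_scope.

Section BQAP.
Variable R : realType.

Definition symmx k (A : 'M[R]_k) : Prop := A^T = A.
Definition psdmx k (A : 'M[R]_k) : Prop :=
  symmx A /\ forall x : 'cV[R]_k, 0 <= (x^T *m A *m x) 0 0.
Definition pdmx k (A : 'M[R]_k) : Prop :=
  symmx A /\ forall x : 'cV[R]_k, x != 0 -> 0 < (x^T *m A *m x) 0 0.

Definition mxinner k l (A B : 'M[R]_(k, l)) : R := \tr (A^T *m B).

(* vec(C): stacks the columns of C; entry C i j sits at position j*n+i *)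
Definition vecmx n (C : 'M[R]_n) : 'cV[R]_(n * n) :=
  \col_k C (mxtens_unindex k).2 (mxtens_unindex k).1.

Definition LQ n (F D C : 'M[R]_n) : 'M[R]_(1 + n * n) :=
  block_mx (0 : 'M[R]_1) (- 2^-1 *: (vecmx C)^T) (- 2^-1 *: vecmx C) (tensmx D F).

(* V = [I_{n-1}; -e^T] : n x (n-1) *)
Definition Vmx n : 'M[R]_(n, n.-1) :=
  \matrix_(i < n, j < n.-1)
    (if (i : nat) == j then 1 else if (i : nat) == n.-1 then -1 else 0).

Definition Vbar n : 'M[R]_(1 + n * n, 1 + n.-1 * n.-1) :=
  block_mx (1 : 'M[R]_1) 0 ((n%:R)^-1 *: (tensmx (const_mx 1 : 'cV[R]_n) (const_mx 1 : 'cV[R]_n)))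
           (tensmx (Vmx n) (Vmx n)).

Definition gangster k (J : {set 'I_k * 'I_k}) (Y : 'M[R]_k) : 'M[R]_k :=
  \matrix_(i, j) (if ((i, j) \in J) || ((j, i) \in J) then Y i j else 0).

Definition in_SJ k (J : {set 'I_k * 'I_k}) (X : 'M[R]_k) : Prop :=
  symmx X /\ gangster J X = X.

Definition E00 k : 'M[R]_k.+1 := delta_mx 0 0.

(* unaugmented Lagrangian L_0^{BQAP}(R,Y,Z), valued in the extended reals;
   the indicator I(Y) is 0 if G_J(Y) = E00 and +oo otherwise. *)
Definition L0 k m (LQm : 'M[R]_k.+1) (Vh : 'M[R]_(k.+1, m)) (mu : R)
  (J : {set 'I_k.+1 * 'I_k.+1}) (Rm : 'M[R]_m) (Y Z : 'M[R]_k.+1) : \bar R :=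
  if gangster J Y == E00 k then
    (mxinner LQm Y - mu * ln (\det Rm) + mxinner Z (Y - Vh *m Rm *m Vh^T))%:E
  else +oo%E.

Definition bqap_system n (Vh : 'M[R]_(1 + n * n, 1 + n.-1 * n.-1))
  (LQm : 'M[R]_(1 + n * n)) (mu : R) (J : {set 'I_(1 + n * n) * 'I_(1 + n * n)})
  (Rm : 'M[R]_(1 + n.-1 * n.-1)) (Z : 'M[R]_(1 + n * n)) : Prop :=
  [/\ symmx Rm /\ symmx Z,
      (- (Vh^T *m Z *m Vh)) *m Rm = mu%:M,
      gangster J (Vh *m Rm *m Vh^T) = E00 (n * n),
      in_SJ J (- (LQm + Z))
    & psdmx Rm /\ psdmx (- (Vh^T *m Z *m Vh))].

End BQAP.

(* Main.v *)
Require Import Defs.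
From HB Require Import structures.
From mathcomp Require Import all_boot all_order all_algebra.
From mathcomp Require Import all_classical all_reals all_analysis.
From mathcomp Require Import mxtens.
From mathcomp Require Import ring lra.
Import Order.TTheory GRing.Theory Num.Theory.
Set Implicit Arguments. Unset Strict Implicit. Unset Printing Implicit Defensive.
Local Open Scope classical_set_scope.
Local Open Scope ring_scope.

Section Aux.
Variable R : realType.

Lemma mul_self_ge0 (x : R) : 0 <= x * x.
Proof. by rewrite -expr2 sqr_ge0. Qed.

Lemma trmxDZ k l (a b : 'M[R]_(k, l)) (t : R) : (a + t *: b)^T = a^T + t *: b^T.
Proof. by apply/matrixP => i j; rewrite !mxE. Qed.

Definition qf k (A : 'M[R]_k) (x : 'cV[R]_k) : R := (x^T *m A *m x) 0 0.

Lemma trTT_ge0 k l (M : 'M[R]_(k, l)) : 0 <= \tr (M^T *m M).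
Proof.
rewrite /mxtrace; apply: sumr_ge0 => i _; rewrite mxE.
apply: sumr_ge0 => j _; rewrite mxE; exact: mul_self_ge0.
Qed.

Lemma trTT_eq0 k (y : 'cV[R]_k) : (y^T *m y) 0 0 = 0 -> y = 0.
Proof.
rewrite mxE; under eq_bigr => l _ do rewrite mxE.
move=> H; apply/matrixP => i j; rewrite (ord1 j) mxE.
have := psumr_eq0P (fun i _ => mul_self_ge0 (y i 0)) H (i:=i) isT.
by move/eqP; rewrite mulf_eq0 orbb => /eqP.
Qed.

Lemma qf_sym k (A : 'M[R]_k) (x y : 'cV[R]_k) : symmx A ->
  (x^T *m A *m y) 0 0 = (y^T *m A *m x) 0 0.
Proof.
move=> HA; rewrite -[in LHS](trmxK (x^T *m A *m y)) mxE.
by rewrite !trmx_mul trmxK HA mulmxA.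
Qed.

Lemma psd_ker k (A : 'M[R]_k) (x : 'cV[R]_k) : psdmx A -> qf A x = 0 -> A *m x = 0.
Proof.
move=> [HS HP] H0.
set y := A *m x.
set s := (y^T *m y) 0 0.
set q := qf A y.
have hq : 0 <= q by apply: HP.
have hs : 0 <= s by rewrite /s; move: (trTT_ge0 y); rewrite /mxtrace big_ord1.
have key : forall t : R, 0 <= 2 * t * s + t ^+ 2 * q.
  move=> t; have := HP (x + t *: y).
  rewrite trmxDZ !mulmxDl !mulmxDr -!scalemxAl -!scalemxAr.
  have e1 : (x^T *m A *m y) 0 0 = s.
    by rewrite qf_sym // /s /y mulmxA.
  have e2 : (y^T *m A *m x) 0 0 = s by rewrite /s /y -mulmxA.
  have e0 : (x^T *m A *m x) 0 0 = 0 by exact: H0.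
  have e3 : (y^T *m A *m y) 0 0 = q by [].
  move: e0 e1 e2 e3.
  set M0 := x^T *m A *m x; set M1 := x^T *m A *m y.
  set M2 := y^T *m A *m x; set M3 := y^T *m A *m y.
  clearbody M0 M1 M2 M3; move=> e0 e1 e2 e3; rewrite !mxE e0 e1 e2 e3.
  by move=> h; apply: le_trans h _; rewrite le_eqVlt; apply/orP; left; apply/eqP; ring.
have := key (- s / (q + 1)).
have hq1 : 0 < q + 1 by lra.
move=> h.
have h2 : 0 <= s ^+ 2 * (- q - 2) * ((q + 1) ^+ 2)^-1.
  apply: le_trans h _; rewrite le_eqVlt; apply/orP; left; apply/eqP.
  by field; apply/eqP => h'; move: hq1; rewrite h' ltxx.
have h3 : 0 <= s ^+ 2 * (- q - 2).
  by move: h2; rewrite pmulr_lge0 // invr_gt0 exprn_gt0.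
have h5 : s ^+ 2 * (q + 2) = 0.
  apply: le_anti; apply/andP; split; last by rewrite mulr_ge0 ?sqr_ge0 //; lra.
  by rewrite -oppr_ge0 -mulrN opprD.
have hs0 : s = 0.
  move/eqP: h5; rewrite mulf_eq0 => /orP [|/eqP]; last by lra.
  by rewrite expf_eq0 /= => /eqP.
by apply: trTT_eq0; rewrite -/s.
Qed.

Lemma psd_unit_pd k (A : 'M[R]_k) : psdmx A -> A \in unitmx -> pdmx A.
Proof.
move=> HA HU; split; first by case: HA.
move=> x hx; rewrite lt_def; apply/andP; split; last by case: HA => _ ->.
apply/eqP => h0; move/eqP: hx; apply.
by rewrite -(mulKmx HU x) (psd_ker HA h0) mulmx0.
Qed.

Lemma m0l m n p (A : 'M[R]_(n, p)) : (0 : 'M[R]_(m, n)) *m A = 0.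
Proof. exact: mul0mx. Qed.
Lemma m0r m n p (A : 'M[R]_(m, n)) : A *m (0 : 'M[R]_(n, p)) = 0.
Proof. exact: mulmx0. Qed.

Lemma m1l m n (A : 'M[R]_(m, n)) : 1%:M *m A = A.
Proof. exact: mul1mx. Qed.
Lemma m1r m n (A : 'M[R]_(m, n)) : A *m 1%:M = A.
Proof. exact: mulmx1. Qed.
Lemma a0r m n (A : 'M[R]_(m, n)) : A + 0 = A.
Proof. exact: addr0. Qed.
Lemma a0l m n (A : 'M[R]_(m, n)) : 0 + A = A.
Proof. exact: add0r. Qed.

Lemma scale_ab m n (M : 'M[R]_(m, n)) (x y : R) : x * y = 1 -> (x * y) *: M = M.
Proof. by move=> ->; rewrite scale1r. Qed.

Lemma addsubK m n (A B : 'M[R]_(m, n)) : B + (A - B) = A.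
Proof. by rewrite addrC subrK. Qed.

Lemma mx11 (M : 'M[R]_1) : M = (M 0 0)%:M.
Proof. by apply/matrixP => i j; rewrite (ord1 i) (ord1 j) !mxE eqxx mulr1n. Qed.

Lemma schur k (P : 'M[R]_(1 + k)) : pdmx P -> exists a (Q : 'M[R]_k) (E : 'M[R]_(1 + k)),
  [/\ 0 < a, pdmx Q, \det E = 1, P = E^T *m block_mx a%:M 0 0 Q *m E
    & \tr Q <= \tr P - a /\ \det P = a * \det Q].
Proof.
move=> [HS HP].
set a : R := ulsubmx P 0 0. set c : 'cV[R]_k := dlsubmx P. set D : 'M[R]_k := drsubmx P.
have Hul : ulsubmx P = a%:M by rewrite [LHS]mx11.
have Hur : ursubmx P = c^T by rewrite /c trmx_dlsub HS.
have HD : D^T = D by rewrite /D trmx_drsub HS.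
have HPb : P = block_mx a%:M c^T c D by rewrite -Hul -Hur submxK.
have ha : 0 < a.
  have hx : col_mx (1 : 'cV[R]_1) (0 : 'cV[R]_k) != 0.
    apply/eqP => /(congr1 usubmx); rewrite col_mxKu => /matrixP /(_ 0 0).
    by rewrite !mxE eqxx /= => /eqP; rewrite oner_eq0.
  have := HP _ hx.
  rewrite HPb tr_col_mx trmx1 trmx0 mul_row_block ?m1l.
  rewrite [0 *m D]m0l [0 *m c]m0l !addr0 mul_row_col mulmx1 [c^T *m 0]mulmx0.
  by rewrite addr0 !mxE eqxx mulr1n.
have ha0 : a != 0 by rewrite gt_eqF.
set b : R := a^-1.
have hab : a * b = 1 by rewrite /b mulfV.
have hb0 : 0 <= b by rewrite /b invr_ge0 ltW.
set Q : 'M[R]_k := D - b *: (c *m c^T).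
set E : 'M[R]_(1 + k) := block_mx 1%:M (b *: c^T) 0 1%:M.
have Hdec : P = E^T *m block_mx a%:M 0 0 Q *m E.
  rewrite /E tr_block_mx !trmx1 trmx0.
  have -> : (b *: c^T)^T = b *: c by apply/matrixP => i j; rewrite !mxE.
  rewrite !mulmx_block ?m0l ?m0r ?a0r ?a0l ?m1l ?m1r ?m0l ?m0r ?a0r ?a0l.
  rewrite [LHS]HPb; congr block_mx.
  - by rewrite mul_scalar_mx scalerA; apply: esym; apply: scale_ab.
  - by rewrite mul_mx_scalar scalerA; apply: esym; apply: scale_ab.
  - rewrite mul_mx_scalar scalerA scale_ab // -scalemxAr /Q; exact: (esym (addsubK _ _)).
have HQs : symmx Q by rewrite /Q /symmx raddfB /= linearZ /= trmx_mul trmxK HD.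
exists a, Q, E; split => //.
- split => // x hx.
  set y : 'cV[R]_(1 + k) := col_mx (- (b *: (c^T *m x))) x.
  have hy : y != 0.
    apply: contra hx => /eqP hy0; apply/eqP.
    rewrite -(col_mxKd (- (b *: (c^T *m x))) x) -/y hy0.
    by apply/matrixP => i j; rewrite !mxE.
  have hEy : E *m y = col_mx 0 x.
    by rewrite /E /y mul_block_col ?m1l ?m0l ?a0l -scalemxAl; congr col_mx; apply: addNr.
  have := HP y hy.
  have -> : y^T *m P *m y = (E *m y)^T *m block_mx a%:M 0 0 Q *m (E *m y).
    by rewrite {1}Hdec trmx_mul !mulmxA.
  by rewrite hEy tr_col_mx trmx0 mul_row_block ?m0l ?a0l mul_row_col ?m0r ?m0l ?a0l.
- by rewrite /E det_ublock !det1 mulr1.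
- split.
    rewrite HPb mxtrace_block mxtrace_scalar /Q raddfB /= mxtraceZ.
    have := trTT_ge0 c^T; rewrite trmxK => h.
    have := mulr_ge0 hb0 h.
    rewrite -/D; lra.
  by rewrite Hdec !det_mulmx det_tr /E det_ublock !det1 !mulr1 mul1r det_ublock det_scalar expr1.
Qed.

Lemma pd_logdet k (P : 'M[R]_k) : pdmx P -> 0 < \det P /\ ln (\det P) <= \tr P - k%:R.
Proof.
elim: k P => [|k IH] P HP.
  by rewrite det_mx00 ln1 /mxtrace big_ord0 subr0; split => //; exact: ltr01.
have [a [Q [E [ha HQ hE Hdec [htr hdet]]]]] := schur HP.
have [hdQ hlQ] := IH Q HQ.
rewrite hdet; split; first by rewrite mulr_gt0.
rewrite lnM ?posrE //.
have hla : ln a <= a - 1.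
  have := @le_ln1Dx R (a - 1); rewrite [1 + _]addrC subrK; apply; lra.
rewrite -natr1; lra.
Qed.

Lemma pd_factor_step k
  (IH : forall Q : 'M[R]_k, pdmx Q -> exists L : 'M[R]_k, Q = L^T *m L)
  (P : 'M[R]_(1 + k)) : pdmx P -> exists L : 'M[R]_(1 + k), P = L^T *m L.
Proof.
move=> HP.
have [a [Q [E [ha HQ hE Hdec [htr hdet]]]]] := schur HP.
have [L' HL'] := IH Q HQ.
pose s : R := Num.sqrt a.
have hs : s * s = a by rewrite /s -expr2 sqr_sqrtr // ltW.
exists (block_mx (s%:M : 'M[R]_1) 0 0 L' *m E).
rewrite trmx_mul tr_block_mx tr_scalar_mx trmx0 Hdec !mulmxA; congr (_ *m _).
rewrite -mulmxA; congr (_ *m _).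
rewrite mulmx_block ?m0l ?m0r ?a0l ?a0r; congr block_mx.
- by rewrite -scalar_mxM hs.
- by apply/matrixP => i j; rewrite !mxE big1 // => l _; rewrite !mxE mul0r.
- exact: HL'.
Qed.

Lemma pd_factor k (P : 'M[R]_k) : pdmx P -> exists L : 'M[R]_k, P = L^T *m L.
Proof.
elim: k P => [|k IH] P HP.
  by exists 0; apply/matrixP => i; case: i.
exact: (pd_factor_step IH HP).
Qed.

Lemma logdet_ineq m (W S Rm : 'M[R]_m) (mu : R) : 0 < mu -> psdmx W ->
  W *m S = mu%:M -> pdmx Rm ->
  \tr (W *m S) - mu * ln (\det S) <= \tr (W *m Rm) - mu * ln (\det Rm).
Proof.
move=> hmu hW hWS hRm.
have hmu0 : mu != 0 by rewrite gt_eqF.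
pose W1 : 'M[R]_m := mu^-1 *: W.
have hW1S : W1 *m S = 1%:M.
  by rewrite /W1 -scalemxAl hWS scale_scalar_mx mulVf.
have hdet : \det W1 * \det S = 1 by rewrite -det_mulmx hW1S det1.
have hW1u : W1 \in unitmx.
  rewrite unitmxE unitfE; apply/eqP => h0; move: hdet; rewrite h0 mul0r => /eqP.
  by rewrite eq_sym oner_eq0.
have hW1psd : psdmx W1.
  case: hW => hWs hWp; split.
    by rewrite /symmx /W1 linearZ /= hWs.
  move=> x; rewrite /W1 -scalemxAr -scalemxAl mxE.
  by apply: mulr_ge0; [rewrite invr_ge0 ltW | apply: hWp].
have hW1pd := psd_unit_pd hW1psd hW1u.
have [hdW1 _] := pd_logdet hW1pd.
have [L HL] := pd_factor hW1pd.
pose P : 'M[R]_m := L *m Rm *m L^T.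
have hLu : L^T \in unitmx.
  rewrite unitmxE unitfE det_tr; apply/eqP => h0.
  by move: hdW1; rewrite HL det_mulmx h0 mulr0 ltxx.
have hPpd : pdmx P.
  case: hRm => hRs hRp; split.
    by rewrite /symmx /P !trmx_mul trmxK hRs mulmxA.
  move=> x hx.
  have -> : x^T *m P *m x = (L^T *m x)^T *m Rm *m (L^T *m x).
    by rewrite /P trmx_mul trmxK !mulmxA.
  apply: hRp; apply: contra hx => /eqP h0; apply/eqP.
  by rewrite -(mulKmx hLu x) h0 mulmx0.
have [hdP hlP] := pd_logdet hPpd.
have [hdR _] := pd_logdet hRm.
have detP : \det P = \det W1 * \det Rm.
  by rewrite /P HL !det_mulmx !det_tr mulrAC.
have trP : \tr P = mu^-1 * \tr (W *m Rm).
  by rewrite /P mxtrace_mulC mulmxA -HL /W1 -scalemxAl mxtraceZ.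
have trS : \tr (W *m S) = mu * m%:R by rewrite hWS mxtrace_scalar mulr_natr.
have hdS : 0 < \det S.
  by rewrite -(pmulr_rgt0 _ hdW1) hdet ltr01.
have hlnS : ln (\det W1) + ln (\det S) = 0 by rewrite -lnM ?posrE // hdet ln1.
move: hlP; rewrite detP trP lnM ?posrE // => hlP.
have := ler_wpM2l (ltW hmu) hlP.
rewrite mulrDr mulrBr mulrA divff // mul1r trS => hfin.
have e : ln (\det S) = - ln (\det W1) by lra.
rewrite e mulrN; lra.
Qed.

Lemma mxinnerE k (A B : 'M[R]_k) : mxinner A B = \sum_i \sum_j A j i * B j i.
Proof.
rewrite /mxinner /mxtrace; apply: eq_bigr => i _; rewrite mxE.
by apply: eq_bigr => j _; rewrite mxE.
Qed.

Lemma gangster_adj k J (A B : 'M[R]_k) :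
  mxinner (gangster J A) B = mxinner A (gangster J B).
Proof.
rewrite !mxinnerE; apply: eq_bigr => i _; apply: eq_bigr => j _; rewrite !mxE.
by case: ifP => _; rewrite ?mul0r ?mulr0.
Qed.

Lemma mxinnerN k (A B : 'M[R]_k) : mxinner (- A) B = - mxinner A B.
Proof.
rewrite !mxinnerE -sumrN; apply: eq_bigr => i _; rewrite -sumrN.
by apply: eq_bigr => j _; rewrite mxE mulNr.
Qed.

Lemma mxinnerD k (A B C : 'M[R]_k) : mxinner (A + B) C = mxinner A C + mxinner B C.
Proof.
rewrite !mxinnerE -big_split; apply: eq_bigr => i _; rewrite -big_split.
by apply: eq_bigr => j _; rewrite mxE mulrDl.
Qed.

Lemma mxinnerB2 k (A B C : 'M[R]_k) : mxinner A (B - C) = mxinner A B - mxinner A C.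
Proof.
rewrite !mxinnerE -sumrB; apply: eq_bigr => i _; rewrite -sumrB.
by apply: eq_bigr => j _; rewrite !mxE mulrBr.
Qed.

Lemma mxinner0 k (A : 'M[R]_k) : mxinner A 0 = 0.
Proof.
rewrite mxinnerE big1 // => i _; rewrite big1 // => j _; by rewrite mxE mulr0.
Qed.

Lemma val_eq k m (LQm Zs : 'M[R]_k) (Vh : 'M[R]_(k, m)) J (E0 : 'M[R]_k)
  (Rm : 'M[R]_m) (Y : 'M[R]_k) (mu : R) :
  symmx Zs -> gangster J (- (LQm + Zs)) = - (LQm + Zs) -> gangster J Y = E0 ->
  mxinner LQm Y - mu * ln (\det Rm) + mxinner Zs (Y - Vh *m Rm *m Vh^T)
  = mxinner (LQm + Zs) E0 + \tr ((- (Vh^T *m Zs *m Vh)) *m Rm) - mu * ln (\det Rm).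
Proof.
move=> HZs hG hY.
have h1 : mxinner (LQm + Zs) Y = mxinner (LQm + Zs) E0.
  by apply: oppr_inj; rewrite -!mxinnerN -{1}hG gangster_adj hY.
have h2 : mxinner Zs (Vh *m Rm *m Vh^T) = - \tr ((- (Vh^T *m Zs *m Vh)) *m Rm).
  rewrite mulNmx raddfN /= opprK /mxinner HZs.
  by rewrite !mulmxA mxtrace_mulC !mulmxA.
rewrite mxinnerB2 h2 -h1 mxinnerD; lra.
Qed.
End Aux.

Unset Implicit Arguments.
Theorem proposition2 (R : realType) (n : nat) (Hn : (2 <= n)%N)
  (F D C : 'M[R]_n) (HF : symmx F) (HD : symmx D)
  (Vh : 'M[R]_(1 + n * n, 1 + n.-1 * n.-1))
  (HVh_orth : Vh^T *m Vh = 1%:M)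
  (HVh_range : exists T : 'M[R]_(1 + n.-1 * n.-1), T \in unitmx /\ Vh = Vbar R n *m T)
  (J : {set 'I_(1 + n * n) * 'I_(1 + n * n)}) (mu : R) (Hmu : 0 < mu)
  (Rs : 'M[R]_(1 + n.-1 * n.-1)) (Zs : 'M[R]_(1 + n * n))
  (Hsol : bqap_system Vh (LQ F D C) mu J Rs Zs)
  (Huniq : forall (Rm : 'M[R]_(1 + n.-1 * n.-1)) (Z : 'M[R]_(1 + n * n)),
      bqap_system Vh (LQ F D C) mu J Rm Z -> Rm = Rs /\ Z = Zs) :
  let Ys := Vh *m Rs *m Vh^T in
  let L := @L0 R (n * n) _ (LQ F D C) Vh mu J in
  [/\ pdmx Rs,
      ereal_sup [set L Rs Ys Z | Z in [set Z : 'M[R]_(1 + n * n) | symmx Z]]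
        = L Rs Ys Zs
    & L Rs Ys Zs
        = ereal_inf [set L p.1 p.2 Zs
                    | p in [set p : 'M[R]_(1 + n.-1 * n.-1) * 'M[R]_(1 + n * n)
                           | pdmx p.1 /\ symmx p.2]]].
Proof.
move=> Ys L.
case: Hsol => [[HRs HZs] HWR Hg HSJ [HRpsd HWpsd]].
have hRu : Rs \in unitmx.
  rewrite unitmxE unitfE; apply/eqP => h0.
  have := congr1 determinant HWR; rewrite det_mulmx h0 mulr0 det_scalar => /eqP.
  by rewrite eq_sym expf_eq0 (gt_eqF Hmu) andbF.
have HRpd := psd_unit_pd HRpsd hRu.
have hYsym : symmx Ys by rewrite /symmx /Ys !trmx_mul trmxK HRs mulmxA.
have hG : gangster J (- (LQ F D C + Zs)) = - (LQ F D C + Zs) by case: HSJ.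
have key : forall Z, L Rs Ys Z = L Rs Ys Zs.
  by move=> Z; rewrite /L /L0 /Ys Hg eqxx subrr !mxinner0.
split => //.
- apply: le_anti; apply/andP; split.
    by apply/ereal_supP => y [Z _ <-]; rewrite key.
  by apply: ereal_sup_ubound; exists Zs.
- apply: le_anti; apply/andP; split.
    apply/ereal_infP => y [[R1 Y1] [hR1 hY1] <-] /=.
    rewrite /L /L0 /Ys Hg eqxx; case: ifP => hg; last by rewrite leey.
    rewrite lee_fin.
    rewrite (val_eq _ _ _ HZs hG Hg) (val_eq _ _ _ HZs hG (eqP hg)).
    have := logdet_ineq Hmu HWpsd HWR hR1; lra.
  by apply: ereal_inf_lbound; exists (Rs, Ys).
Qed.
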